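(* The category $\mathbf{AlgLPries}$ of algebraic L-spaces and coherent L-morphisms is a full subcategory of the category $\mathbf{ConLPries}$ of continuous L-spaces and proper L-morphisms.
   Context: A Priestley space is a Stone space $X$ with a partial order such that clopen upsets separate points. An L-space is a Priestley space in which the downset of each clopen set is clopen and the closure of each open upset is open. ${\sf ClopUp}(X)$ is the set of clopen upsets; $\mathrm{cl}$ denotes closure. An L-morphism is a continuous order-preserving map $f:X\to X'$ between L-spaces with $f^{-1}(\mathrm{cl}\,U)=\mathrm{cl}\,f^{-1}(U)$ for every open upset $U$ of $X'$. The spatial part of $X$ is $Y=\{y\in X\mid{\downarrow}y\text{ clopen}\}$. A Scott upset is a closed upset $F$ with $\min F\subseteq Y$; ${\sf ClopSUp}(X)$ is the set of clopen Scott upsets. For $U,V\in{\sf ClopUp}(X)$, $V\ll U$ means that for every open upset $W$, $U\subseteq\mathrm{cl}\,W$ implies $V\subseteq W$; $\ker U=\bigcup\{V\in{\sf ClopUp}(X)\mid V\ll U\}$; $\mathrm{core}\,U=\bigcup\{V\in{\sf ClopSUp}(X)\mid V\subseteq U\}$. $X$ is a continuous L-space if $\ker U$ is dense in $U$ for each $U\in{\sf ClopUp}(X)$, and an algebraic L-space if $\mathrm{core}\,U$ is dense in $U$ for each $U\in{\sf ClopUp}(X)$. An L-morphism $f:X_1\to X_2$ is proper if $f^{-1}(\ker U)\subseteq\ker f^{-1}(U)$, and coherent if $f^{-1}(\mathrm{core}\,U)\subseteq\mathrm{core}\,f^{-1}(U)$, for all $U\in{\sf ClopUp}(X_2)$.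 *)

(* Defs.v *)
From mathcomp Require Import all_boot all_order.
From mathcomp Require Import all_classical all_reals all_analysis.
Set Implicit Arguments. Unset Strict Implicit. Unset Printing Implicit Defensive.
Local Open Scope classical_set_scope.

Section LSpaces.
Context {X : topologicalType} (le : X -> X -> Prop).

Definition is_partial_order :=
  [/\ forall x, le x x,
      forall x y z, le x y -> le y z -> le x z &
      forall x y, le x y -> le y x -> x = y].

Definition upset (A : set X) := forall x y, A x -> le x y -> A y.

Definition downset_of (A : set X) : set X := [set y | exists2 x, A x & le y x].

Definition stone_space :=
  [/\ compact [set: X], hausdorff_space X & zero_dimensional X].

Definition priestley :=
  [/\ stone_space, is_partial_order &
      forall x y, ~ le x y -> exists U, [/\ clopen U, upset U, U x & ~ U y]].

Definition L_space :=
  [/\ priestley,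
      forall A, clopen A -> clopen (downset_of A) &
      forall U, open U -> upset U -> open (closure U)].

Definition clop_up (U : set X) := clopen U /\ upset U.

Definition spatial : set X := [set y | clopen (downset_of [set y])].

Definition minimals (F : set X) : set X :=
  [set x | F x /\ forall z, F z -> le z x -> z = x].

Definition scott_upset (F : set X) :=
  [/\ closed F, upset F & minimals F `<=` spatial].

Definition clop_scott_up (U : set X) := clopen U /\ scott_upset U.

Definition way_below (V U : set X) :=
  forall W, open W -> upset W -> U `<=` closure W -> V `<=` W.

Definition ker (U : set X) : set X :=
  \bigcup_(V in [set V | clop_up V /\ way_below V U]) V.

Definition core (U : set X) : set X :=
  \bigcup_(V in [set V | clop_scott_up V /\ V `<=` U]) V.

(* "A is dense in U" : U is contained in the closure of A *)
Definition continuous_L_space :=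
  L_space /\ forall U, clop_up U -> U `<=` closure (ker U).

Definition algebraic_L_space :=
  L_space /\ forall U, clop_up U -> U `<=` closure (core U).

End LSpaces.

Section Morphisms.
Context {X1 X2 : topologicalType} (le1 : X1 -> X1 -> Prop) (le2 : X2 -> X2 -> Prop).

Definition L_morphism (f : X1 -> X2) :=
  [/\ continuous f,
      forall x y, le1 x y -> le2 (f x) (f y) &
      forall U : set X2, open U -> upset le2 U ->
        f @^-1` (closure U) = closure (f @^-1` U)].

Definition proper_L_morphism (f : X1 -> X2) :=
  L_morphism f /\
  forall U, clop_up le2 U -> f @^-1` (ker le2 U) `<=` ker le1 (f @^-1` U).

Definition coherent_L_morphism (f : X1 -> X2) :=
  L_morphism f /\
  forall U, clop_up le2 U -> f @^-1` (core le2 U) `<=` core le1 (f @^-1` U).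

End Morphisms.

(* Main.v *)
Require Import Defs.
From mathcomp Require Import all_boot all_order.
From mathcomp Require Import all_classical all_reals all_analysis.
Local Open Scope classical_set_scope.

Section Aux.
Context {X : topologicalType} (le : X -> X -> Prop).

Lemma min_below : priestley le -> forall C : set X, closed C -> forall x, C x ->
  exists m, [/\ C m, le m x & forall z, C z -> le z m -> z = m].
Proof.
case=> [[cpt _ _] [refl trans anti] sep] C Ccl x Cx.
pose P := fun y => C y /\ le y x.
pose T := {y : X | P y}.
pose R : rel T := fun s t => `[< le (sval t) (sval s) >].
have [t tmax] : exists t, forall s, R t s -> s = t.
  apply: Zorn.
  - by move=> t; apply/asboolP; apply: refl.
  - move=> r s t /asboolP H1 /asboolP H2; apply/asboolP; exact: trans H2 H1.
  - move=> [s Ps] [t Pt] /asboolP /= H1 /asboolP /= H2.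
    have E : s = t by apply: anti.
    subst t; congr exist; exact: Prop_irrelevance.
  - move=> A Atot.
    have [[s0 As0]|nA] := pselect (exists s, A s); last first.
      have Px : P x by split => //; apply: refl.
      by exists (exist _ x Px) => s As; exfalso; apply: nA; exists s.
    pose B := fun s : T => C `&` downset_of le [set sval s].
    pose F := filter_from A B.
    have FF : Filter F.
      apply: filter_from_filter; first by exists s0.
      move=> i j Ai Aj; have [/asboolP Hij|/asboolP Hji] := Atot _ _ Ai Aj.
      + exists j => // y [Cy [z -> yz]]; split; split => //.
        * by exists (sval i) => //; apply: trans Hij.
        * by exists (sval j).
      + exists i => // y [Cy [z -> yz]]; split; split => //.
        * by exists (sval i).
        * by exists (sval j) => //; apply: trans Hji.
    have PF : ProperFilter F.
      apply: filter_from_proper => // i Ai; exists (sval i); split.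
        by case: (svalP i).
      by exists (sval i) => //; apply: refl.
    have FT : F [set: X] by exists s0.
    have [p [_ clp]] := cpt F PF FT.
    have inB : forall s, A s -> closure (B s) p.
      by move=> s As N Np; apply: clp => //; exists s.
    have Cp : C p.
      by apply: Ccl; apply: (closureS _ (inB _ As0)) => y [].
    have lep : forall s, A s -> le p (sval s).
      move=> s As; have [//|nle] := pselect (le p (sval s)).
      have [U [[oU _] uU Up nUs]] := sep _ _ nle.
      have [y [[_ [z -> yz]] Uy]] := inB s As U (open_nbhs_nbhs (conj oU Up)).
      by exfalso; apply: nUs; apply: uU yz.
    have Pp : P p by split => //; apply: trans (lep _ As0) (proj2 (svalP s0)).
    by exists (exist _ p Pp) => s As; apply/asboolP; apply: lep.
exists (sval t); split; [by case: (svalP t) | by case: (svalP t) |].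
move=> z Cz zt.
have Pz : P z by split => //; apply: trans zt (proj2 (svalP t)).
have := tmax (exist _ z Pz); rewrite /R /= => H.
by rewrite -(H (introT (asboolP _) zt)).
Qed.

Lemma scott_way_below V U : priestley le -> clop_scott_up le V -> V `<=` U ->
  way_below le V U.
Proof.
move=> pri [[_ Vcl] [_ uV mV]] VU W oW uW UW x Vx.
have [m [Vm mx mmin]] := min_below pri _ Vcl _ Vx.
have [oD _] : spatial le m by apply: mV; split.
have Dm : downset_of le [set m] m by exists m => //; case: pri => _ [r _ _] _; apply: r.
have [w [Ww [z -> wm]]] := UW m (VU m Vm) _ (open_nbhs_nbhs (conj oD Dm)).
exact: (uW _ _ (uW _ _ Ww wm) mx).
Qed.

Lemma core_sub_ker U : priestley le -> core le U `<=` ker le U.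
Proof.
move=> pri x [V [VS VU] Vx]; exists V => //; split.
  by case: VS => [cV [_ uV _]].
exact: scott_way_below.
Qed.

Lemma ker_sub_core U : algebraic_L_space le -> clop_up le U ->
  ker le U `<=` core le U.
Proof.
move=> [_ alg] cU x [V [_ wb] Vx]; apply: (wb (core le U)) => //.
- by apply: bigcup_open => W [[[oW _] _] _].
- move=> a b [W WS Wa] ab; exists W => //.
  by case: WS => [[_ [_ uW _]] _]; apply: uW ab.
- exact: alg.
Qed.

End Aux.

Theorem theorem4p8 :
  (forall (X : topologicalType) (le : X -> X -> Prop),
      algebraic_L_space le -> continuous_L_space le) /\
  (forall (X1 X2 : topologicalType) (le1 : X1 -> X1 -> Prop)
          (le2 : X2 -> X2 -> Prop) (f : X1 -> X2),
      algebraic_L_space le1 -> algebraic_L_space le2 ->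
      (coherent_L_morphism le1 le2 f <-> proper_L_morphism le1 le2 f)).
Proof.
split.
  move=> X le A; split; first by case: A.
  move=> U cU; apply: subset_trans (proj2 A U cU) _; apply: closureS.
  by apply: core_sub_ker; case: A => [[]].
move=> X1 X2 le1 le2 f A1 A2.
have pri1 : priestley le1 by case: A1 => [[]].
have pri2 : priestley le2 by case: A2 => [[]].
split.
  move=> [Lf coh]; split => // U cU x /= kx.
  apply: core_sub_ker => //; apply: coh => //=.
  exact: ker_sub_core.
move=> [Lf prp]; split => // U cU x /= kx.
have cU1 : clop_up le1 (f @^-1` U).
  case: Lf => [fc fm _]; case: cU => [[oU clU] uU]; split.
    split; first by move/continuousP: fc; apply.
    by move/continuous_closedP: fc; apply.
  by move=> a b Ua ab; apply: uU (fm _ _ ab).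
apply: ker_sub_core => //; apply: prp => //=.
exact: core_sub_ker.
Qed.
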